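(* Assume A1, A2, A3(D), $\beta\in[0,1)$ and $0<\eta<2N/(\sigma_{\max}^2H_{s_0})$, where $s_0=\ell^{-1}(N\mathcal{L}(w(1)))$. Let $C_1=\frac{\sigma_{\max}^2H_{s_0}}{2N}\eta\in(0,1)$. Let $w(t)$ be the GDM iterates, with the convention $w(0)=w(1)$, and define $$\xi(t)=\mathcal{L}(w(t))+\frac{\beta}{2\eta(1-\beta)}\|w(t)-w(t-1)\|^2.$$ Then for every $t\ge1$ and every $\alpha\in[0,1]$, writing $w(t+\alpha)=w(t)+\alpha(w(t+1)-w(t))$, $$\xi(t)\ge\mathcal{L}(w(t+\alpha))+\frac{\beta\alpha^2}{2\eta(1-\beta)}\|w(t+1)-w(t)\|^2+\frac{(1-C_1)\alpha^2}{\eta}\|w(t+1)-w(t)\|^2.$$ In particular, $\xi(t)\ge\xi(t+1)+\frac{1-C_1}{\eta}\|w(t+1)-w(t)\|^2$ for all $t\ge1$.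
   Context: Setting. The data are $S=\{x_1,\dots,x_N\}\subset\mathbb{R}^d$, with labels absorbed. The empirical loss is $\mathcal{L}(w)=\frac1N\sum_i\ell(\langle w,x_i\rangle)$. $\sigma_{\max}$ is the spectral norm of $(x_1,\dots,x_N)$. A1: there is $w$ with $\langle w,x_i\rangle>0$ for all $i$. A2: $\ell$ is differentiable, $\ell'<0$, $\ell(x),\ell'(x)\to0$ as $x\to\infty$, and $\limsup_{x\to-\infty}\ell'(x)<0$. There are positive $\mu_\pm,x_\pm$ with $-\ell'(x)\le(1+e^{-\mu_+x})e^{-x}$ for $x>x_+$ and $-\ell'(x)\ge(1-e^{-\mu_-x})e^{-x}$ for $x>x_-$. $\ell^{-1}$ is the inverse of the bijection $\ell:\mathbb{R}\to(0,\infty)$. A3(D): $H_{s_0}$ is the smallest constant with $|\ell'(x)-\ell'(y)|\le H_{s_0}|x-y|$ for $x,y\ge s_0$ (finite for every $s_0$). GDM: $m(0)=0$, $m(t)=\beta m(t-1)+(1-\beta)\nabla\mathcal{L}(w(t))$, $w(t+1)=w(t)-\eta m(t)$ for $t\ge1$. *)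

(* Defs.v *)
From HB Require Import structures.
From mathcomp Require Import all_boot all_order all_algebra.
From mathcomp Require Import all_classical all_reals all_analysis.
Set Implicit Arguments. Unset Strict Implicit. Unset Printing Implicit Defensive.
Import Order.TTheory GRing.Theory Num.Theory.
Import numFieldNormedType.Exports.
Local Open Scope classical_set_scope.
Local Open Scope ring_scope.

Section Defs.
Variable R : realType.

Definition dotp (d : nat) (u v : 'rV[R]_d) : R := \sum_(j < d) u ord0 j * v ord0 j.
Definition sqnorm (d : nat) (u : 'rV[R]_d) : R := dotp u u.

Definition emp_loss (l : R -> R) (N d : nat) (x : 'I_N -> 'rV[R]_d) (w : 'rV[R]_d) : R :=
  N%:R^-1 * \sum_(i < N) l (dotp w (x i)).

Definition emp_grad (dl : R -> R) (N d : nat) (x : 'I_N -> 'rV[R]_d) (w : 'rV[R]_d)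
  : 'rV[R]_d :=
  N%:R^-1 *: \sum_(i < N) (dl (dotp w (x i)) *: x i).

(* spectral norm of the d x N matrix (x_1, ..., x_N):
   sup { ||sum_i u_i x_i|| : u in R^N, ||u|| <= 1 } *)
Definition sigma_max (N d : nat) (x : 'I_N -> 'rV[R]_d) : R :=
  sup [set Num.sqrt (sqnorm (\sum_(i < N) u i *: x i)) |
        u in [set u : 'I_N -> R | \sum_(i < N) u i ^+ 2 <= 1]].

(* H_{s0}: smallest Lipschitz constant of dl on [s0, +oo) *)
Definition lip_const (dl : R -> R) (s0 : R) : R :=
  sup [set r : R | exists a b : R, [/\ s0 <= a, s0 <= b, a != b &
                    r = `|dl a - dl b| / `|a - b|]].
End Defs.

(* Main.v *)
Require Import Defs.
From HB Require Import structures.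
From mathcomp Require Import all_boot all_order all_algebra.
From mathcomp Require Import all_classical all_reals all_analysis.
From mathcomp Require Import ring lra.
Import Order.TTheory GRing.Theory Num.Theory.
Import numFieldNormedType.Exports.
Local Open Scope classical_set_scope.
Local Open Scope ring_scope.
Section Dot.
Context {R : realType} {d : nat}.
Implicit Types u v z : 'rV[R]_d.

Lemma dotpC u v : dotp u v = dotp v u.
Proof. by rewrite /dotp; apply: eq_bigr => j _; rewrite mulrC. Qed.
Lemma dotpDl u v z : dotp (u + v) z = dotp u z + dotp v z.
Proof. by rewrite /dotp -big_split; apply: eq_bigr => j _; rewrite !mxE mulrDl. Qed.
Lemma dotpNl u z : dotp (- u) z = - dotp u z.
Proof. by rewrite /dotp -sumrN; apply: eq_bigr => j _; rewrite !mxE mulNr. Qed.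
Lemma dotpBl u v z : dotp (u - v) z = dotp u z - dotp v z.
Proof. by rewrite dotpDl dotpNl. Qed.
Lemma dotpZl a u z : dotp (a *: u) z = a * dotp u z.
Proof. by rewrite /dotp mulr_sumr; apply: eq_bigr => j _; rewrite !mxE mulrA. Qed.
Lemma dotpDr u v z : dotp z (u + v) = dotp z u + dotp z v.
Proof. by rewrite dotpC dotpDl !(dotpC z). Qed.
Lemma dotpBr u v z : dotp z (u - v) = dotp z u - dotp z v.
Proof. by rewrite dotpC dotpBl !(dotpC z). Qed.
Lemma dotpZr a u z : dotp z (a *: u) = a * dotp z u.
Proof. by rewrite dotpC dotpZl dotpC. Qed.
Lemma dotp_sumr (N : nat) (f : 'I_N -> 'rV[R]_d) z :
  dotp z (\sum_(i < N) f i) = \sum_(i < N) dotp z (f i).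
Proof.
rewrite /dotp exchange_big /=; apply: eq_bigr => j _.
by rewrite summxE mulr_sumr.
Qed.
Lemma sqnorm_ge0 u : 0 <= sqnorm u.
Proof. by apply: sumr_ge0 => j _; rewrite -expr2 sqr_ge0. Qed.
Lemma sqnorm_eq0 u : sqnorm u = 0 -> u = 0.
Proof.
move=> /eqP; rewrite /sqnorm /dotp psumr_eq0; last by move=> j _; rewrite -expr2 sqr_ge0.
move=> /allP h; apply/rowP => j; rewrite mxE.
by have := h j (mem_index_enum _); rewrite /= mulf_eq0 orbb => /eqP.
Qed.
Lemma sqnormB u v : sqnorm (u - v) = sqnorm u - 2 * dotp u v + sqnorm v.
Proof. rewrite /sqnorm dotpBl !dotpBr (dotpC v u); ring. Qed.
Lemma sqnormZ a u : sqnorm (a *: u) = a ^+ 2 * sqnorm u.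
Proof. by rewrite /sqnorm dotpZl dotpZr mulrA expr2. Qed.
End Dot.

Lemma sq_le_sum {R : realType} {N} (u : 'I_N -> R) i : u i ^+ 2 <= \sum_(k < N) u k ^+ 2.
Proof.
rewrite (bigD1 i) //= lerDl; apply: sumr_ge0 => k _; exact: sqr_ge0.
Qed.

Lemma sigma_bound {R : realType} {N d} (x : 'I_N -> 'rV[R]_d) (u : 'I_N -> R) :
  sqnorm (\sum_(i < N) u i *: x i) <= sigma_max x ^+ 2 * \sum_(i < N) u i ^+ 2.
Proof.
set E := [set Num.sqrt (sqnorm (\sum_(i < N) u i *: x i)) |
        u in [set u : 'I_N -> R | \sum_(i < N) u i ^+ 2 <= 1]].
have hE : has_ubound E.
  exists (Num.sqrt (\sum_(j < d) (\sum_(i < N) `|x i ord0 j|) ^+ 2)).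
  move=> z [v hv <-]; rewrite ler_sqrt; last first.
    by apply: sumr_ge0 => j _; exact: sqr_ge0.
  rewrite /sqnorm /dotp; apply: ler_sum => j _; rewrite -expr2.
  rewrite summxE.
  have h1 : `|\sum_(i < N) (v i *: x i) ord0 j| <= \sum_(i < N) `|x i ord0 j|.
    apply: (le_trans (ler_norm_sum _ _ _)); apply: ler_sum => i _.
    rewrite mxE normrM; apply: ler_piMl => //.
    have h2 := le_trans (sq_le_sum v i) hv.
    rewrite -(ler_pXn2r (n := 2)) // ?nnegrE //; first by rewrite expr1n real_normK ?num_real.
  rewrite -real_normK ?num_real //; apply: ler_pM => //.
have Hub : forall v : 'I_N -> R, \sum_(i < N) v i ^+ 2 <= 1 ->
    sqnorm (\sum_(i < N) v i *: x i) <= sigma_max x ^+ 2.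
  move=> v hv.
  have h1 : Num.sqrt (sqnorm (\sum_(i < N) v i *: x i)) <= sigma_max x.
    by apply: (ub_le_sup hE); exists v.
  have h0 := sqrtr_ge0 (sqnorm (\sum_(i < N) v i *: x i)).
  rewrite -(sqr_sqrtr (sqnorm_ge0 (\sum_(i < N) v i *: x i))).
  by rewrite !expr2; apply: ler_pM.
set q := \sum_(i < N) u i ^+ 2.
have q0 : 0 <= q by apply: sumr_ge0 => i _; exact: sqr_ge0.
case: (ltgtP q 0) q0 => // [qp|qz] _; last first.
  have uz : forall i, u i = 0.
    move=> i; apply/eqP; rewrite -sqrf_eq0 eq_le sqr_ge0 andbT -qz.
    exact: sq_le_sum.
  have -> : \sum_(i < N) u i *: x i = 0.
    by rewrite big1 // => i _; rewrite uz scale0r.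
  rewrite qz mulr0 /sqnorm /dotp big1 // => j _; by rewrite mxE mul0r.
pose r := Num.sqrt q.
have rp : 0 < r by rewrite /r sqrtr_gt0.
have hv := Hub (fun i => u i / r).
have e1 : \sum_(i < N) (u i / r) ^+ 2 = 1.
  under eq_bigr do rewrite expr_div_n.
  rewrite -mulr_suml (sqr_sqrtr (ltW qp)) divff //; exact: lt0r_neq0.
have e2 : \sum_(i < N) (u i / r) *: x i = r^-1 *: \sum_(i < N) u i *: x i.
  rewrite scaler_sumr; apply: eq_bigr => i _; by rewrite scalerA mulrC.
have := hv ltac:(by rewrite e1); rewrite e2 sqnormZ exprVn (sqr_sqrtr (ltW qp)).
move=> h.
have e3 : sqnorm (\sum_(i < N) u i *: x i) = q * (q^-1 * sqnorm (\sum_(i < N) u i *: x i)).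
  by rewrite mulrA divff ?mul1r // lt0r_neq0.
by rewrite e3 [X in _ <= X]mulrC ler_pM2l.
Qed.


Lemma sigma_bound_t {R : realType} {N d} (x : 'I_N -> 'rV[R]_d) (D : 'rV[R]_d) :
  0 < sigma_max x ^+ 2 ->
  \sum_(i < N) dotp D (x i) ^+ 2 <= sigma_max x ^+ 2 * sqnorm D.
Proof.
move=> sp; set lam := sigma_max x ^+ 2.
set Su := \sum_(i < N) dotp D (x i) *: x i.
have eS : dotp D Su = \sum_(i < N) dotp D (x i) ^+ 2.
  rewrite /Su dotp_sumr; apply: eq_bigr => i _; by rewrite dotpZr expr2.
have hB := sigma_bound x (fun i => dotp D (x i)).
have h0 := sqnorm_ge0 (lam *: D - Su).
rewrite sqnormB sqnormZ dotpZl eS in h0.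
rewrite -/lam -/Su in hB.
move: hB h0; set S := \sum_(i < N) _; set B := sqnorm Su; set A := sqnorm D => hB h0.
have : lam * S <= lam * (lam * A) by rewrite mulrA -expr2; lra.
by rewrite ler_pM2l.
Qed.

Lemma lip_bound {R : realType} (dl : R -> R) s0
  (A3s : exists M, forall a b, s0 <= a -> s0 <= b -> `|dl a - dl b| <= M * `|a - b|) :
  forall a b, s0 <= a -> s0 <= b -> `|dl a - dl b| <= lip_const dl s0 * `|a - b|.
Proof.
move=> a b ha hb; case: (eqVneq a b) => [->|nab].
  by rewrite !subrr normr0 mulr0.
have nz : 0 < `|a - b| by rewrite normr_gt0 subr_eq0.
have hE : has_ubound [set r : R | exists a b : R, [/\ s0 <= a, s0 <= b, a != b &
                    r = `|dl a - dl b| / `|a - b|]].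
  case: A3s => M hM; exists M => r [a' [b' [ha' hb' nab' ->]]].
  have nz' : 0 < `|a' - b'| by rewrite normr_gt0 subr_eq0.
  by rewrite ler_pdivrMr // hM.
have : `|dl a - dl b| / `|a - b| <= lip_const dl s0 by apply: (ub_le_sup hE); exists a, b.
by rewrite ler_pdivrMr // mulrC.
Qed.

Lemma smooth1 (R : realType) (l dl : R -> R) (s0 H : R)
  (Hder : forall s : R, is_derive s 1 l (dl s))
  (Hlip : forall a b, s0 <= a -> s0 <= b -> `|dl a - dl b| <= H * `|a - b|)
  a b : s0 <= a -> s0 <= b ->
  l b <= l a + dl a * (b - a) + H / 2 * (b - a) ^+ 2.
Proof.
move=> ha hb.
pose g : R -> R := l - (cst (dl a)) * id - (cst (H / 2)) * ((id - cst a) ^+ 2).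
pose dg := fun s => dl s - dl a - H * (s - a).
have gE : forall s, g s = l s - dl a * s - H / 2 * (s - a) ^+ 2.
  by move=> s; rewrite /g exprfctE.
have Dg : forall s : R, is_derive s 1 g (dg s).
  move=> s; rewrite /g /dg; apply: is_derive_eq.
  rewrite exprfctE /= !scaler0 !addr0 subr0 expr1 [_%:A]mulr1 !scaler1 /GRing.scale /=.
  have -> : (id - cst a) s = s - a by []. by field.
have cg : forall s : R, derivable g s 1.
  move=> s; have Ds := Dg s; exact: ex_derive.
have cont : forall u v : R, {within `[u, v], continuous g}.
  move=> u v; apply: derivable_within_continuous => s _; exact: cg.
suff : g b <= g a.
  rewrite !gE subrr expr0n /= mulr0 subr0 => h.
  have : l b <= l a - dl a * a + dl a * b + H / 2 * (b - a) ^+ 2 by lra.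
  move=> h2; apply: (le_trans h2); rewrite mulrBr; lra.
rewrite -subr_le0; case: (leP a b) => hab.
  have [c cab ->] := MVT_segment hab (fun x _ => Dg x) (cont a b).
  have [hac hcb] : a <= c /\ c <= b by move: cab; rewrite in_itv /= => /andP.
  apply: mulr_le0_ge0; last by rewrite subr_ge0.
  have := Hlip c a (le_trans ha hac) ha.
  rewrite /dg (ger0_norm (x := c - a)) ?subr_ge0 // => h.
  have := ler_norm (dl c - dl a); lra.
have hba := ltW hab.
have [c cab E] := MVT_segment hba (fun x _ => Dg x) (cont b a).
have [hbc hca] : b <= c /\ c <= a by move: cab; rewrite in_itv /= => /andP.
rewrite -opprB E oppr_le0.
apply: mulr_ge0; last by rewrite subr_ge0.
have := Hlip c a (le_trans hb hbc) ha.
rewrite /dg (ler0_norm (x := c - a)) ?subr_le0 // => h.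
have := ler_norm (- (dl c - dl a)); rewrite normrN; lra.
Qed.

Lemma loss_smooth {R : realType} {N d} (x : 'I_N -> 'rV[R]_d) (l dl : R -> R) s0
  (Hder : forall s : R, is_derive s 1 l (dl s))
  (A3s : exists M, forall a b, s0 <= a -> s0 <= b -> `|dl a - dl b| <= M * `|a - b|)
  (sp : 0 < sigma_max x ^+ 2) (Hp : 0 <= lip_const dl s0) (w0 D : 'rV[R]_d) :
  (forall i, s0 <= dotp w0 (x i)) -> (forall i, s0 <= dotp (w0 + D) (x i)) ->
  emp_loss l x (w0 + D) <= emp_loss l x w0 + dotp (emp_grad dl x w0) D
     + sigma_max x ^+ 2 * lip_const dl s0 / (2 * N%:R) * sqnorm D.
Proof.
move=> h0 h1; set H := lip_const dl s0.
have sm := @smooth1 R l dl s0 H Hder (@lip_bound R dl s0 A3s).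
have e1 : forall i, dotp (w0 + D) (x i) = dotp w0 (x i) + dotp D (x i) by move=> i; rewrite dotpDl.
have step : \sum_(i < N) l (dotp (w0 + D) (x i)) <=
   \sum_(i < N) l (dotp w0 (x i)) + \sum_(i < N) dl (dotp w0 (x i)) * dotp D (x i)
   + H / 2 * \sum_(i < N) dotp D (x i) ^+ 2.
  rewrite mulr_sumr -!big_split /=; apply: ler_sum => i _.
  have := sm _ _ (h0 i) (h1 i); by rewrite e1 [dotp w0 (x i) + _]addrC addrK.
have eg : dotp (emp_grad dl x w0) D = N%:R^-1 * \sum_(i < N) dl (dotp w0 (x i)) * dotp D (x i).
  rewrite dotpC /emp_grad dotpZr dotp_sumr; congr (_ * _); apply: eq_bigr => i _.
  by rewrite dotpZr.
have hs := sigma_bound_t x D sp.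
rewrite /emp_loss eg.
have Ni : 0 <= N%:R^-1 :> R by rewrite invr_ge0.
have := ler_wpM2l Ni step.
have := ler_wpM2l Hp hs.
set S2 := sigma_max x ^+ 2.
set A := \sum_(i < N) l _; set B := \sum_(i < N) l _; set C := \sum_(i < N) _ * _.
set Q := \sum_(i < N) _.
move=> h2 h3.
have -> : S2 * H / (2 * N%:R) * sqnorm D = N%:R^-1 * (H / 2 * (S2 * sqnorm D)).
  case: (eqVneq (N%:R : R) 0) => [->|nz]; first by rewrite mulr0 invr0 !mulr0 !mul0r.
  by field; rewrite nz.
have : N%:R^-1 * (H / 2 * Q) <= N%:R^-1 * (H / 2 * (S2 * sqnorm D)).
  apply: ler_wpM2l => //; apply: ler_wpM2l; first by rewrite divr_ge0.
  by apply: (le_trans _ hs).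
nra.
Qed.

Lemma alg {R : realType} (b e k al A B P G : R) :
  0 <= b < 1 -> 0 < e -> 0 <= al <= 1 -> 0 <= A -> 0 <= B - 2 * (al * P) + al ^+ 2 * A ->
  A = b * P - e * (1 - b) * G ->
  al * G + k * (al ^+ 2 * A)
  + b * al ^+ 2 / (2 * e * (1 - b)) * A + (1 - k * e) * al ^+ 2 / e * A
  <= b / (2 * e * (1 - b)) * B.
Proof.
move=> /andP [b0 b1] e0 /andP [a0 a1] A0 Q0 hA.
have u0 : 0 < e * (1 - b) by rewrite mulr_gt0 // subr_gt0.
have hG : G = (b * P - A) / (e * (1 - b)).
  by rewrite hA; field; rewrite subr_eq0 !gt_eqF.
rewrite -subr_ge0.
have -> : b / (2 * e * (1 - b)) * B - (al * G + k * (al ^+ 2 * A)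
  + b * al ^+ 2 / (2 * e * (1 - b)) * A + (1 - k * e) * al ^+ 2 / e * A)
  = (b * (B - 2 * (al * P) + al ^+ 2 * A) + 2 * (al * (1 - al)) * A) / (2 * (e * (1 - b))).
  rewrite hG; field.
  by rewrite subr_eq0 !gt_eqF.
apply: divr_ge0; last by rewrite ltW // mulr_gt0.
apply: addr_ge0; first exact: mulr_ge0.
by rewrite !mulr_ge0 // subr_ge0.
Qed.

Lemma l_decr {R : realType} (l dl : R -> R)
  (Hder : forall s : R, is_derive s 1 l (dl s)) (Hneg : forall s : R, dl s < 0) :
  forall a b, a < b -> l b < l a.
Proof.
move=> a b ab.
have cont : {within `[a, b], continuous l}.
  apply: derivable_within_continuous => s _; have Ds := Hder s; exact: ex_derive.
have [c _ E] := MVT ab (fun x _ => Hder x) cont.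
by rewrite -subr_lt0 E pmulr_llt0 // subr_gt0.
Qed.

Lemma l_pos {R : realType} (l dl : R -> R)
  (Hder : forall s : R, is_derive s 1 l (dl s)) (Hneg : forall s : R, dl s < 0)
  (Hl_inf : l s @[s --> +oo] --> 0) : forall s, 0 < l s.
Proof.
move=> a; rewrite ltNge; apply/negP => la.
have la1 : l (a + 1) < 0 by apply: lt_le_trans la; apply: l_decr => //; rewrite ltrDl.
have ep : 0 < - l (a + 1) by rewrite oppr_gt0.
move/cvgrPdist_lt: Hl_inf => /(_ _ ep) [M [_ hM]].
pose s := Num.max M (a + 1) + 1.
have hs : M < s by rewrite /s ltr_pwDr // le_max lexx.
have := hM s hs; rewrite sub0r normrN.
have hs2 : a + 1 < s by rewrite /s ltr_pwDr // le_max lexx orbT.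
have := @l_decr R l dl Hder Hneg _ _ hs2.
move=> h1; rewrite ltr0_norm; first by rewrite ltrN2 ltNge (ltW h1).
exact: lt_trans la1.
Qed.
Theorem lemma1 (R : realType) (N d : nat) (x : 'I_N -> 'rV[R]_d)
  (l dl : R -> R)
  (* A1: linear separability *)
  (A1 : exists w : 'rV[R]_d, forall i, 0 < dotp w (x i))
  (* A2 *)
  (Hder : forall s : R, is_derive s 1 l (dl s))
  (Hneg : forall s : R, dl s < 0)
  (Hl_inf : l s @[s --> +oo] --> 0)
  (Hdl_inf : dl s @[s --> +oo] --> 0)
  (Hlimsup : exists c : R, c < 0 /\ \forall s \near -oo, dl s <= c)
  (Htail_up : exists mup xp : R, [/\ 0 < mup, 0 < xp &
       forall s, xp < s -> - dl s <= (1 + expR (- (mup * s))) * expR (- s)])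
  (Htail_lo : exists mum xm : R, [/\ 0 < mum, 0 < xm &
       forall s, xm < s -> (1 - expR (- (mum * s))) * expR (- s) <= - dl s])
  (* A3(D): dl is Lipschitz on every [s, +oo) *)
  (A3 : forall s : R, exists M : R, forall a b : R, s <= a -> s <= b ->
          `|dl a - dl b| <= M * `|a - b|)
  (beta eta : R) (Hbeta : 0 <= beta < 1)
  (* GDM iterates, with w 0 = w 1 *)
  (w m : nat -> 'rV[R]_d)
  (Hm0 : m 0%N = 0) (Hw0 : w 0%N = w 1%N)
  (Hm : forall t : nat, (1 <= t)%N ->
          m t = beta *: m t.-1 + (1 - beta) *: emp_grad dl x (w t))
  (Hw : forall t : nat, (1 <= t)%N -> w t.+1 = w t - eta *: m t)
  (* s0 = l^{-1}(N L(w(1))) *)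
  (s0 : R) (Hs0 : l s0 = N%:R * emp_loss l x (w 1%N))
  (Heta : 0 < eta < 2 * N%:R / (sigma_max x ^+ 2 * lip_const dl s0)) :
  let C1 := sigma_max x ^+ 2 * lip_const dl s0 / (2 * N%:R) * eta in
  let xi := fun t : nat => emp_loss l x (w t)
              + beta / (2 * eta * (1 - beta)) * sqnorm (w t - w t.-1) in
  (forall t : nat, (1 <= t)%N -> forall alpha : R, 0 <= alpha <= 1 ->
     emp_loss l x (w t + alpha *: (w t.+1 - w t))
       + beta * alpha ^+ 2 / (2 * eta * (1 - beta)) * sqnorm (w t.+1 - w t)
       + (1 - C1) * alpha ^+ 2 / eta * sqnorm (w t.+1 - w t)
     <= xi t)
  /\
  (forall t : nat, (1 <= t)%N ->
     xi t.+1 + (1 - C1) / eta * sqnorm (w t.+1 - w t) <= xi t).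
Proof.
move=> C1 xi.
case/andP: Hbeta => b0 b1; case/andP: Heta => e0 eH.
set H := lip_const dl s0 in eH C1 xi *.
set S2 := sigma_max x ^+ 2 in eH C1 xi *.
have Np : 0 < (N%:R : R).
  rewrite ltNge; apply/negP => hN.
  have N0 : (N%:R : R) = 0 by apply/eqP; rewrite eq_le hN ler0n.
  by move: eH; rewrite N0 mulr0 mul0r => /(lt_trans e0); rewrite ltxx.
have Pp : 0 < S2 * H.
  rewrite ltNge; apply/negP => hP.
  have : 2 * N%:R / (S2 * H) <= 0.
    by apply: mulr_ge0_le0; [rewrite mulr_ge0 // ltW | rewrite invr_le0].
  by move=> /(lt_le_trans eH) /(lt_trans e0); rewrite ltxx.
have S2p : 0 < S2.
  rewrite lt_def sqr_ge0 andbT; apply/eqP => S0.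
  by move: Pp; rewrite S0 mul0r ltxx.
have Hp : 0 < H by move: Pp; rewrite pmulr_rgt0.
set k := S2 * H / (2 * N%:R) in C1 *.
have kp : 0 < k by rewrite divr_gt0 // mulr_gt0.
have C1lt : C1 < 1.
  have : k * eta < k * k^-1 by rewrite ltr_pM2l // /k invf_div.
  by rewrite mulfV ?gt_eqF.
have iC : 0 < (1 - C1) / eta by rewrite divr_gt0 // subr_gt0.
have lpos := @l_pos R l dl Hder Hneg Hl_inf.
have ldec := @l_decr R l dl Hder Hneg.
set L1 := emp_loss l x (w 1%N) in Hs0 *.
have sumE : forall v, \sum_(i < N) l (dotp v (x i)) = N%:R * emp_loss l x v.
  by move=> v; rewrite /emp_loss mulrA divff ?mul1r // gt_eqF.
have lsum : forall v i, l (dotp v (x i)) <= \sum_(j < N) l (dotp v (x j)).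
  move=> v i; rewrite (bigD1 i) //= lerDl; apply: sumr_ge0 => j _; exact: ltW (lpos _).
have region : forall v, emp_loss l x v <= L1 -> forall i, s0 <= dotp v (x i).
  move=> v hv i; rewrite leNgt; apply/negP => /ldec h.
  have := lsum v i; rewrite sumE.
  have : N%:R * emp_loss l x v <= l s0 by rewrite Hs0 ler_pM2l.
  move=> h1 h2; have := le_lt_trans (le_trans h2 h1) h; by rewrite ltxx.
have Dp_eq : forall t, (1 <= t)%N -> w t - w t.-1 = - eta *: m t.-1.
  case=> [//|[|n]] _.
    by rewrite /= Hw0 Hm0 subrr scaler0.
  by rewrite /= (Hw n.+1) // addrAC subrr add0r scaleNr.
have D_eq : forall t, (1 <= t)%N -> w t.+1 - w t =
    beta *: (w t - w t.-1) - (eta * (1 - beta)) *: emp_grad dl x (w t).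
  move=> t t1; rewrite Dp_eq // (Hw t) // (Hm t) //.
  by apply/rowP => j; rewrite !mxE; ring.
have A3s := A3 s0.
set c := beta / (2 * eta * (1 - beta)) in xi *.
have c0 : 0 <= c by rewrite divr_ge0 // ltW // !mulr_gt0 // subr_gt0.
have step : forall t, (1 <= t)%N -> xi t <= L1 -> forall alpha : R, 0 <= alpha <= 1 ->
     emp_loss l x (w t + alpha *: (w t.+1 - w t))
       + beta * alpha ^+ 2 / (2 * eta * (1 - beta)) * sqnorm (w t.+1 - w t)
       + (1 - C1) * alpha ^+ 2 / eta * sqnorm (w t.+1 - w t)
     <= xi t.
  move=> t t1 hxi.
  have hD := D_eq t t1.
  rewrite /xi in hxi *.
  set D := w t.+1 - w t in hD *; set Dp := w t - w t.-1 in hD hxi *.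
  set g := emp_grad dl x (w t) in hD.
  set A := sqnorm D; set B := sqnorm Dp.
  have A0 : 0 <= A := sqnorm_ge0 D.
  have B0 : 0 <= B := sqnorm_ge0 Dp.
  have hA : A = beta * dotp Dp D - eta * (1 - beta) * dotp g D.
    by rewrite /A /sqnorm {1}hD dotpBl !dotpZl.
  have Q0 : forall al : R, 0 <= B - 2 * (al * dotp Dp D) + al ^+ 2 * A.
    by move=> al; have := sqnorm_ge0 (Dp - al *: D); rewrite sqnormB sqnormZ dotpZr.
  have w0r : forall i, s0 <= dotp (w t) (x i).
    apply: region; apply: le_trans hxi; rewrite lerDl; exact: mulr_ge0.
  have ineq : forall al : R, 0 <= al <= 1 ->
      (forall i, s0 <= dotp (w t + al *: D) (x i)) ->
      emp_loss l x (w t + al *: D) + beta * al ^+ 2 / (2 * eta * (1 - beta)) * A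
       + (1 - C1) * al ^+ 2 / eta * A <= emp_loss l x (w t) + c * B.
    move=> al hal hr.
    have hs := @loss_smooth R N d x l dl s0 Hder A3s S2p (ltW Hp) (w t) (al *: D) w0r hr.
    rewrite dotpZr sqnormZ -/S2 -/H -/k in hs.
    have bb : 0 <= beta < 1 by rewrite b0 b1.
    have := @alg R beta eta k al A B (dotp Dp D) (dotp g D) bb e0 hal A0 (Q0 al) hA.
    rewrite -/c /C1 => h; rewrite -/g -/A in hs; lra.
  suff allr : forall al : R, 0 <= al <= 1 -> forall i, s0 <= dotp (w t + al *: D) (x i).
    by move=> al hal; apply: ineq => //; exact: allr.
  pose mm i := dotp (w t) (x i); pose dd i := dotp D (x i).
  have mE : forall (al : R) i, dotp (w t + al *: D) (x i) = mm i + al * dd i.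
    by move=> al i; rewrite dotpDl dotpZl.
  move=> al /andP [a0 a1] i1; rewrite mE leNgt; apply/negP => hlt.
  have d1 : dd i1 < 0.
    rewrite ltNge; apply/negP => d0; move: hlt; rewrite ltNge.
    by rewrite (le_trans (w0r i1)) // lerDl mulr_ge0.
  pose P := [pred j | dd j < 0].
  pose r j := (mm j - s0) / (- dd j).
  have [ist Pis hmin] := @arg_minP _ _ _ i1 P r d1.
  have dis : dd ist < 0 := Pis.
  set rs := r ist.
  have rs0 : 0 <= rs.
    by rewrite /rs /r divr_ge0 // ?subr_ge0 ?w0r // oppr_ge0 ltW.
  have rsal : rs < al.
    apply: (le_lt_trans (hmin i1 d1)); rewrite /r ltr_pdivrMr ?oppr_gt0 //; lra.
  have regs : forall j, s0 <= mm j + rs * dd j.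
    move=> j; case: (ltP (dd j) 0) => dj.
      have := hmin j dj; rewrite [r j]/r ler_pdivlMr ?oppr_gt0 // mulrN -/rs; lra.
    by rewrite (le_trans (w0r j)) // lerDl mulr_ge0.
  have eqs : mm ist + rs * dd ist = s0.
    by rewrite /rs /r; field; rewrite lt_eqF.
  have hrs := ineq rs (ltac:(by rewrite rs0 (ltW (lt_le_trans rsal a1))))
               (fun j => ltac:(by rewrite mE; exact: regs j)).
  have ls0 : l s0 <= N%:R * emp_loss l x (w t + rs *: D).
    by rewrite -sumE -eqs -mE; apply: lsum.
  have HL : l s0 = N%:R * L1 by [].
  case: (ltgtP rs 0) rs0 => // [rsp|rsz] _.
    have Ap : 0 < A.
      rewrite lt_def A0 andbT; apply/eqP => /sqnorm_eq0 D0.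
      by move: dis; rewrite /dd D0 /dotp big1 ?ltxx // => j _; rewrite mxE mul0r.
    have t1p : 0 < (1 - C1) * rs ^+ 2 / eta * A.
      by rewrite mulr_gt0 // mulrAC mulr_gt0 // exprn_gt0.
    have t2p : 0 <= beta * rs ^+ 2 / (2 * eta * (1 - beta)) * A.
      by rewrite mulr_ge0 // mulrAC mulr_ge0 // ?exprn_ge0 ?ltW.
    have : emp_loss l x (w t + rs *: D) < L1 by rewrite -/B in hxi; lra.
    rewrite -(ltr_pM2l Np) -HL => /(le_lt_trans ls0); by rewrite ltxx.
  have mis : mm ist = s0 by rewrite -eqs rsz mul0r addr0.
  have hsum : \sum_(j < N) l (mm j) + N%:R * (c * B) <= l (mm ist).
    rewrite mis HL /mm sumE -mulrDr ler_pM2l // -/B in hxi *; exact: hxi.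
  rewrite (bigD1 ist) //= in hsum.
  have cB0 : 0 <= N%:R * (c * B) by apply: mulr_ge0; [exact: ltW | exact: mulr_ge0].
  have S0 : 0 <= \sum_(j < N | j != ist) l (mm j) by apply: sumr_ge0 => j _; exact: ltW.
  have allis : forall j, j = ist.
    move=> j; apply/eqP; apply/negP => /negP nj.
    have : l (mm j) <= \sum_(k < N | k != ist) l (mm k).
      rewrite (bigD1 j) //= lerDl; apply: sumr_ge0 => kk _; exact: ltW.
    have := lpos (mm j); lra.
  have cBz : c * B = 0.
    apply/eqP; rewrite eq_le mulr_ge0 // andbT.
    have : N%:R * (c * B) <= 0 by lra.
    by rewrite pmulr_rle0.
  have bDp : beta *: Dp = 0.
    move/eqP: cBz; rewrite mulf_eq0 => /orP [/eqP cz|/eqP /sqnorm_eq0 ->]; last by rewrite scaler0.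
    suff -> : beta = 0 by rewrite scale0r.
    move: cz; rewrite /c => /eqP; rewrite mulf_eq0 invr_eq0 => /orP [/eqP //|].
    by rewrite !mulf_eq0 (negbTE (lt0r_neq0 e0)) subr_eq0 (gt_eqF b1) pnatr_eq0.
  have dg : dotp g (x ist) <= 0.
    rewrite dotpC /g /emp_grad dotpZr dotp_sumr.
    apply: mulr_ge0_le0; first by rewrite invr_ge0 ltW.
    apply: sumr_le0 => j _; rewrite dotpZr (allis j) -/(mm ist).
    apply: mulr_le0_ge0; first exact: ltW.
    exact: sqnorm_ge0.
  have : 0 <= dd ist.
    rewrite /dd hD dotpBl bDp dotpZl.
    have -> : dotp 0 (x ist) = 0 by rewrite /dotp big1 // => j _; rewrite mxE mul0r.
    rewrite sub0r -mulNr; apply: mulr_le0 => //.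
    rewrite oppr_le0; apply: mulr_ge0; [exact: ltW | by rewrite subr_ge0 ltW].
  by rewrite leNgt dis.
have step1 : forall t, (1 <= t)%N -> xi t <= L1 ->
    xi t.+1 + (1 - C1) / eta * sqnorm (w t.+1 - w t) <= xi t.
  move=> t t1 hxi; have := step t t1 hxi 1 (ltac:(by rewrite ler01 lexx)).
  rewrite scale1r [w t + _]addrC subrK expr1n !mulr1 -/c /xi /=; lra.
have inv : forall t, (1 <= t)%N -> xi t <= L1.
  elim=> [//|t IH] _; case: t IH => [_|t IH].
    rewrite /xi /= Hw0 subrr.
    have -> : sqnorm (0 : 'rV[R]_d) = 0 by rewrite /sqnorm /dotp big1 // => j _; rewrite mxE mul0r.
    by rewrite mulr0 addr0.
  have h := step1 t.+1 erefl (IH erefl).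
  apply: le_trans (IH erefl); apply: le_trans h; rewrite lerDl.
  by apply: mulr_ge0; [exact: ltW | exact: sqnorm_ge0].
split.
  by move=> t t1; apply: step => //; exact: inv.
by move=> t t1; apply: step1 => //; exact: inv.
Qed.
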